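(* Let $n\ge 6$ be even, and let $d_*=(\epsilon_1,\dots,\epsilon_{n-1},h)$ and $d_*'=(\epsilon_1',\dots,\epsilon_{n-1}',h')$ be neighbors. Then there is no index $j\in[1,n-1]$ with $\epsilon_j=1$ and $\epsilon'_j=-1$, nor with $\epsilon_j=-1$ and $\epsilon'_j=1$.
   Context: Symbols are $[1,n]$; $\mathrm{dist}(a,b)$ is the minimum of the residues of $a-b$ and $b-a$ mod $n$ (in $[0,n-1]$). A Latin row is a permutation $(s_1,\dots,s_n)$ of $[1,n]$; its inner distance is $\min_j\mathrm{dist}(s_j,s_{j+1})$. Its extended difference row is $(\epsilon_1,\dots,\epsilon_{n-1},h)$ where, with $h_j\in[0,n-1]$, $h_j\equiv s_{j+1}-s_j\pmod n$ ($1\le j\le n-1$), $h_n\equiv s_1-s_n\pmod n$, $\epsilon_j=h_j-\frac n2$, $h=h_n-\frac n2$ (integers); for rows of inner distance $\frac n2-1$ each $\epsilon_j\in\{-1,0,1\}$. A Latin rectangle is a matrix over $[1,n]$ with no repeats in any row or column; its inner distance is the minimum of $\mathrm{dist}$ over symbols in horizontally or vertically adjacent cells. Two extended difference rows of Latin rows of inner distance $\frac n2-1$ are neighbors if there exist Latin rows $r,r'$ with these extended difference rows such that the $2\times n$ matrix with rows $r$ and $r'$ is a Latin rectangle of inner distance $\frac n2-1$. *)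

(* Defs.v *)
(* Symbols are natural numbers in [1,n]; rows are seqs of length n,
   indexed from 0 (position j+1 of the paper is index j here). *)
From mathcomp Require Import all_boot all_algebra.
Set Implicit Arguments. Unset Strict Implicit. Unset Printing Implicit Defensive.

Definition resid (n a b : nat) : nat := (a + n - b) %% n.

Definition dist (n a b : nat) : nat := minn (resid n a b) (resid n b a).

Definition latin_row (n : nat) (s : seq nat) : bool := perm_eq s (iota 1 n).

(* inner distance of a row: min_j dist(s_j, s_{j+1}), j = 1..n-1
   (n is a neutral element since every dist is < n) *)
Definition row_inner_dist (n : nat) (s : seq nat) : nat :=
  \big[minn/n]_(j < n.-1) dist n (nth 0 s j) (nth 0 s j.+1).

Definition ext_diff (n : nat) (s : seq nat) : seq int :=
  [seq (Posz (resid n (nth 0 s j.+1) (nth 0 s j)) - Posz n./2)%R | j <- iota 0 n.-1]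
  ++ [:: (Posz (resid n (nth 0 s 0) (nth 0 s n.-1)) - Posz n./2)%R].

Definition latin_rect2 (n : nat) (r r' : seq nat) : bool :=
  [&& latin_row n r, latin_row n r' &
      [forall j : 'I_n, nth 0 r j != nth 0 r' j]].

Definition rect2_inner_dist (n : nat) (r r' : seq nat) : nat :=
  minn (minn (row_inner_dist n r) (row_inner_dist n r'))
       (\big[minn/n]_(j < n) dist n (nth 0 r j) (nth 0 r' j)).

Definition neighbors (n : nat) (d d' : seq int) : Prop :=
  exists r r' : seq nat,
    [/\ latin_row n r, latin_row n r',
        row_inner_dist n r = n./2 - 1 & row_inner_dist n r' = n./2 - 1] /\
    [/\ ext_diff n r = d, ext_diff n r' = d',
        latin_rect2 n r r' & rect2_inner_dist n r r' = n./2 - 1].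

(* Main.v *)
Require Import Defs.
From mathcomp Require Import all_boot all_algebra zify.
Set Implicit Arguments. Unset Strict Implicit. Unset Printing Implicit Defensive.

Definition rsd n x y := if x <= y then y - x else y + n - x.

Definition Hr (m x y : nat) : Prop :=
  (x <= y /\ m.-1 <= y - x /\ y - x <= m.+1) \/
  (y < x /\ m.-1 <= y + (m + m) - x /\ y + (m + m) - x <= m.+1).

Definition Er (m x y c : nat) : Prop :=
  (x <= y /\ y - x = c) \/ (y < x /\ y + (m + m) - x = c).

Lemma resid_rsd n x y : 1 <= x <= n -> 1 <= y <= n -> resid n y x = rsd n x y.
Proof.
move=> hx hy; rewrite /resid /rsd; case: ifP => h.
  rewrite (_ : y + n - x = y - x + n); last by lia.
  rewrite modnDr modn_small //; lia.
rewrite modn_small //; lia.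
Qed.

Lemma dist_rsd n x y : 1 <= x <= n -> 1 <= y <= n ->
  dist n x y = minn (rsd n y x) (rsd n x y).
Proof. by move=> hx hy; rewrite /dist !resid_rsd. Qed.

Lemma bigmin_le_seq (I : eqType) (s : seq I) (F : I -> nat) x0 i :
  i \in s -> \big[minn/x0]_(j <- s) F j <= F i.
Proof.
elim: s => // a s IH; rewrite in_cons big_cons => /orP [/eqP -> | /IH h].
  exact: geq_minl.
exact: leq_trans (geq_minr _ _) h.
Qed.

Lemma bigmin_le k (F : 'I_k -> nat) x0 i : \big[minn/x0]_(j < k) F j <= F i.
Proof. exact: bigmin_le_seq (mem_index_enum i). Qed.

Lemma nth_ext_diff n r j : j < n.-1 ->
  nth 0%R (ext_diff n r) j = (Posz (resid n (nth 0%N r j.+1) (nth 0%N r j)) - Posz n./2)%R.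
Proof.
move=> hj; rewrite /ext_diff nth_cat size_map size_iota hj.
by rewrite (nth_map 0) ?size_iota // nth_iota.
Qed.

Lemma rowfacts n r : perm_eq r (iota 1 n) ->
  [/\ (forall k, k < n -> 1 <= nth 0 r k <= n),
      (forall k k', k < n -> k' < n -> nth 0 r k = nth 0 r k' -> k = k') &
      (forall x, 1 <= x <= n -> exists2 k, k < n & nth 0 r k = x)].
Proof.
move=> hp.
have hs : size r = n by rewrite (perm_size hp) size_iota.
have hu : uniq r by rewrite (perm_uniq hp) iota_uniq.
split.
- move=> k hk; have : nth 0 r k \in r by rewrite mem_nth // hs.
  by rewrite (perm_mem hp) mem_iota; lia.
- move=> k k' hk hk' E; apply/eqP; rewrite -(nth_uniq 0 _ _ hu) ?hs //; exact/eqP.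
- move=> x hx; have : x \in r by rewrite (perm_mem hp) mem_iota; lia.
  move=> xr; exists (index x r); first by rewrite -hs index_mem.
  exact: nth_index.
Qed.

Section Arith.
Variables (m a : nat).
Hypothesis (hm : 3 <= m) (ha : 1 <= a <= m + m).

Lemma A1 x : 1 <= x <= m + m -> rsd (m + m) a x < m + m.
Proof. rewrite /rsd; case: ifP; lia. Qed.

Lemma A2 x y : 1 <= x <= m + m -> 1 <= y <= m + m ->
  rsd (m + m) a x = rsd (m + m) a y -> x = y.
Proof. rewrite /rsd; case: ifP; case: ifP; lia. Qed.

Lemma A3 c : c < m + m -> exists2 x, 1 <= x <= m + m & rsd (m + m) a x = c.
Proof.
move=> hc; exists (if a + c <= m + m then a + c else a + c - (m + m)).
  case: ifP; lia.
rewrite /rsd; case: ifP; case: ifP; lia.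
Qed.

Lemma A4 x y : 1 <= x <= m + m -> 1 <= y <= m + m ->
  m.-1 <= minn (rsd (m + m) y x) (rsd (m + m) x y) ->
  Hr m (rsd (m + m) a x) (rsd (m + m) a y).
Proof.
rewrite leq_min /Hr /rsd => hx hy /andP [].
case: ifP; case: ifP; case: ifP; case: ifP; lia.
Qed.

Lemma A5 x y c : 1 <= x <= m + m -> 1 <= y <= m + m ->
  rsd (m + m) x y = c -> Er m (rsd (m + m) a x) (rsd (m + m) a y) c.
Proof.
rewrite /Er /rsd => hx hy.
case: ifP; case: ifP; case: ifP; lia.
Qed.
End Arith.
Lemma core (m : nat) (f g : nat -> nat) (j : nat) :
  3 <= m ->
  (forall k, k < m + m -> f k < m + m) ->
  (forall k, k < m + m -> g k < m + m) ->
  (forall k k', k < m + m -> k' < m + m -> f k = f k' -> k = k') ->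
  (forall k k', k < m + m -> k' < m + m -> g k = g k' -> k = k') ->
  (forall c, c < m + m -> exists2 k, k < m + m & f k = c) ->
  (forall k, k.+1 < m + m -> Hr m (f k) (f k.+1)) ->
  (forall k, k.+1 < m + m -> Hr m (g k) (g k.+1)) ->
  (forall k, k < m + m -> Hr m (f k) (g k)) ->
  j.+1 < m + m -> f j = 0 -> f j.+1 = m.+1 ->
  Er m (g j) (g j.+1) m.-1 -> False.
Proof.
move=> hm fr gr finj ginj fsurj fh gh v hj f0 f1 e.
have fne : forall a b, a < m + m -> b < m + m -> a <> b -> f a <> f b.
  by move=> a b ha hb hab E; apply: hab; exact: finj E.
have gne : forall a b, a < m + m -> b < m + m -> a <> b -> g a <> g b.
  by move=> a b ha hb hab E; apply: hab; exact: ginj E.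
have [g0 g1] : g j = m.+1 /\ g j.+1 = 0.
  have := v j (ltnW hj); have := v j.+1 hj; have := gr j (ltnW hj);
  have := gr j.+1 hj; rewrite /Hr /Er in e *; rewrite f0 f1; lia.
have R : j.+2 < m + m -> f j.+2 = 1 /\ g j.+2 = m.
  move=> h2.
  have := fh j.+1 h2; have := gh j.+1 h2; have := v j.+2 h2.
  have := fne j.+2 j h2 (ltnW (ltnW h2)) ltac:(lia).
  have := gne j.+2 j h2 (ltnW (ltnW h2)) ltac:(lia).
  have := fr j.+2 h2; have := gr j.+2 h2.
  rewrite /Hr ?f0 ?f1 ?g0 ?g1; lia.
have L : 0 < j -> f j.-1 = m /\ g j.-1 = 1.
  move=> h0.
  have hjm : j.-1.+1 = j by lia.
  have h1 : j.-1 < m + m by lia.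
  have := fh j.-1 ltac:(lia); have := gh j.-1 ltac:(lia); have := v j.-1 h1.
  have := fne j.-1 j.+1 h1 hj ltac:(lia).
  have := gne j.-1 j.+1 h1 hj ltac:(lia).
  have := fr j.-1 h1; have := gr j.-1 h1.
  rewrite hjm /Hr ?f0 ?f1 ?g0 ?g1; lia.

have [jz|jpos] := posnP j.
  subst j.
  have [f2 g2] := R ltac:(lia).
  have Hno : forall q, q < m + m -> f q = m -> g q <> 1.
    move=> q hq fq gq.
    have q0 : q <> 0 by move=> E; subst q; lia.
    have q1 : q <> 1 by move=> E; subst q; lia.
    have q2 : q <> 2 by move=> E; subst q; lia.
    have [q3|q3] := eqVneq q 3.
      subst q.
      have := fh 3 ltac:(lia); have := gh 3 ltac:(lia); have := v 4 ltac:(lia).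
      have := fne 4 0 ltac:(lia) ltac:(lia) ltac:(lia).
      have := fne 4 2 ltac:(lia) ltac:(lia) ltac:(lia).
      have := gne 4 0 ltac:(lia) ltac:(lia) ltac:(lia).
      have := gne 4 2 ltac:(lia) ltac:(lia) ltac:(lia).
      have := fr 4 ltac:(lia); have := gr 4 ltac:(lia).
      rewrite /Hr ?f0 ?f1 ?g0 ?g1 ?f2 ?g2 ?fq ?gq; lia.
    have hqm : q.-1.+1 = q by lia.
    have h1 : q.-1 < m + m by lia.
    have := fh q.-1 ltac:(lia); have := gh q.-1 ltac:(lia); have := v q.-1 h1.
    have := fne q.-1 0 h1 ltac:(lia) ltac:(lia).
    have := fne q.-1 2 h1 ltac:(lia) ltac:(lia).
    have := gne q.-1 0 h1 ltac:(lia) ltac:(lia).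
    have := gne q.-1 2 h1 ltac:(lia) ltac:(lia).
    have := fr q.-1 h1; have := gr q.-1 h1.
    rewrite hqm /Hr ?f0 ?f1 ?g0 ?g1 ?f2 ?g2 ?fq ?gq; lia.
  pose P i := exists2 k, k < m + m & f k = m - i /\ g k = m + m - 1 - i.
  have chain : forall i, i <= m - 2 -> P i /\ (i = 0 \/ P i.-1).
    elim=> [_|i IH hi].
      split; last by left.
      have [k hk fk] := fsurj m ltac:(lia).
      exists k => //; split; first by lia.
      have := v k hk; have := Hno k hk fk; have := gr k hk.
      have := gne k 1 hk ltac:(lia) ltac:(move=> E; subst k; lia).
      rewrite /Hr ?fk ?g1; lia.
    have [Pi Hprev] := IH ltac:(lia).
    split; last by right.
    case: Pi => ki hki [fki gki].
    have [k hk fk] := fsurj (m - i.+1) ltac:(lia).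
    exists k => //; split; first by lia.
    have := v k hk; have := gr k hk.
    have := gne k 1 hk ltac:(lia) ltac:(move=> E; subst k; lia).
    have := gne k ki hk hki ltac:(move=> E; subst k; lia).
    case: Hprev => [i0|[kp hkp [fkp gkp]]].
      subst i; rewrite /Hr ?fk ?g1 ?gki; lia.
    have := gne k kp hk hkp ltac:(move=> E; subst k; lia).
    rewrite /Hr ?fk ?g1 ?gki ?gkp; lia.
  have [[k hk [fk gk]] _] := chain (m - 2) (leqnn _).
  have := gne k 0 hk ltac:(lia) ltac:(move=> E; subst k; lia).
  rewrite g0 gk; lia.
have [jn|jn] := eqVneq j (m + m - 2).
  have [fl gl] := L jpos.
  have fn2 : f (m + m - 3) = m by have -> : m + m - 3 = j.-1 by lia.
  have gn2 : g (m + m - 3) = 1 by have -> : m + m - 3 = j.-1 by lia.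
  have fn1 : f (m + m - 2) = 0 by rewrite -jn.
  have gn1 : g (m + m - 2) = m.+1 by rewrite -jn.
  have fn0 : f (m + m - 1) = m.+1 by have -> : m + m - 1 = j.+1 by lia.
  have gn0 : g (m + m - 1) = 0 by have -> : m + m - 1 = j.+1 by lia.
  have Hno : forall q, q < m + m -> f q = 1 -> g q <> m.
    move=> q hq fq gq.
    have q0 : q < m + m - 3.
      have : q <> m + m - 3 by move=> E; subst q; lia.
      have : q <> m + m - 2 by move=> E; subst q; lia.
      have : q <> m + m - 1 by move=> E; subst q; lia.
      lia.
    have [q3|q3] := eqVneq q (m + m - 4).
      subst q.
      have hh : (m + m - 5).+1 = m + m - 4 by lia.
      have h1 : m + m - 5 < m + m by lia.
      have := fh (m + m - 5) ltac:(lia); have := gh (m + m - 5) ltac:(lia).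
      have := v (m + m - 5) h1.
      have := fne (m + m - 5) (m + m - 3) h1 ltac:(lia) ltac:(lia).
      have := fne (m + m - 5) (m + m - 1) h1 ltac:(lia) ltac:(lia).
      have := gne (m + m - 5) (m + m - 3) h1 ltac:(lia) ltac:(lia).
      have := gne (m + m - 5) (m + m - 1) h1 ltac:(lia) ltac:(lia).
      have := fr _ h1; have := gr _ h1.
      rewrite hh /Hr ?fn2 ?fn0 ?gn2 ?gn0 ?fq ?gq; lia.
    have h1 : q.+1 < m + m by lia.
    have := fh q h1; have := gh q h1; have := v q.+1 h1.
    have := fne q.+1 (m + m - 3) h1 ltac:(lia) ltac:(lia).
    have := fne q.+1 (m + m - 1) h1 ltac:(lia) ltac:(lia).
    have := gne q.+1 (m + m - 3) h1 ltac:(lia) ltac:(lia).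
    have := gne q.+1 (m + m - 1) h1 ltac:(lia) ltac:(lia).
    have := fr _ h1; have := gr _ h1.
    rewrite /Hr ?fn2 ?fn0 ?gn2 ?gn0 ?fq ?gq; lia.
  pose P i := exists2 k, k < m + m & f k = i.+1 /\ g k = m + 2 + i.
  have chain : forall i, i <= m - 2 -> P i /\ (i = 0 \/ P i.-1).
    elim=> [_|i IH hi].
      split; last by left.
      have [k hk fk] := fsurj 1 ltac:(lia).
      exists k => //; split; first by lia.
      have := v k hk; have := Hno k hk fk; have := gr k hk.
      have := gne k (m + m - 2) hk ltac:(lia) ltac:(move=> E; subst k; lia).
      rewrite /Hr ?fk ?gn1; lia.
    have [Pi Hprev] := IH ltac:(lia).
    split; last by right.
    case: Pi => ki hki [fki gki].
    have [k hk fk] := fsurj i.+2 ltac:(lia).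
    exists k => //; split; first by lia.
    have := v k hk; have := gr k hk.
    have := gne k (m + m - 1) hk ltac:(lia) ltac:(move=> E; subst k; lia).
    have := gne k (m + m - 2) hk ltac:(lia) ltac:(move=> E; subst k; lia).
    have := gne k ki hk hki ltac:(move=> E; subst k; lia).
    case: Hprev => [i0|[kp hkp [fkp gkp]]].
      subst i; rewrite /Hr ?fk ?gn0 ?gn1 ?gki; lia.
    have := gne k kp hk hkp ltac:(move=> E; subst k; lia).
    rewrite /Hr ?fk ?gn0 ?gn1 ?gki ?gkp; lia.
  have [[k hk [fk gk]] _] := chain (m - 2) (leqnn _).
  have := gr k hk; lia.
have [fl gl] := L jpos.
have [fr2 gr2] := R ltac:(lia).
have [j3|j3] := ltnP j.+3 (m + m).
  have := fh j.+2 j3; have := gh j.+2 j3; have := v j.+3 j3.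
  have := fne j.+3 j.-1 j3 ltac:(lia) ltac:(lia).
  have := fne j.+3 j.+1 j3 ltac:(lia) ltac:(lia).
  have := gne j.+3 j.-1 j3 ltac:(lia) ltac:(lia).
  have := gne j.+3 j.+1 j3 ltac:(lia) ltac:(lia).
  have := fr _ j3; have := gr _ j3.
  rewrite /Hr ?fr2 ?gr2 ?fl ?gl ?f1 ?g1; lia.
have hh : j.-2.+1 = j.-1 by lia.
have h1 : j.-2 < m + m by lia.
have := fh j.-2 ltac:(lia); have := gh j.-2 ltac:(lia); have := v j.-2 h1.
have := fne j.-2 j h1 ltac:(lia) ltac:(lia).
have := fne j.-2 j.+2 h1 ltac:(lia) ltac:(lia).
have := gne j.-2 j h1 ltac:(lia) ltac:(lia).
have := gne j.-2 j.+2 h1 ltac:(lia) ltac:(lia).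
have := fr _ h1; have := gr _ h1.
rewrite hh /Hr ?fr2 ?gr2 ?fl ?gl ?f0 ?g0; lia.
Qed.

Lemma build n m (r1 r2 : seq nat) j :
  n = m + m -> 3 <= m ->
  perm_eq r1 (iota 1 n) -> perm_eq r2 (iota 1 n) ->
  (forall k, k.+1 < n -> m.-1 <= dist n (nth 0 r1 k) (nth 0 r1 k.+1)) ->
  (forall k, k.+1 < n -> m.-1 <= dist n (nth 0 r2 k) (nth 0 r2 k.+1)) ->
  (forall k, k < n -> m.-1 <= dist n (nth 0 r1 k) (nth 0 r2 k)) ->
  j.+1 < n -> resid n (nth 0 r1 j.+1) (nth 0 r1 j) = m.+1 ->
  resid n (nth 0 r2 j.+1) (nth 0 r2 j) = m.-1 -> False.
Proof.
move=> hn hm p1 p2 d1 d2 dv hj e1 e2; subst n.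
have [rg1 inj1 sj1] := rowfacts p1.
have [rg2 inj2 sj2] := rowfacts p2.
set a := nth 0 r1 j.
have ha : 1 <= a <= m + m by exact: rg1 (ltnW hj).
apply: (@core m (fun k => rsd (m + m) a (nth 0 r1 k))
                (fun k => rsd (m + m) a (nth 0 r2 k)) j hm).
- by move=> k hk; apply: A1 => //; exact: rg1.
- by move=> k hk; apply: A1 => //; exact: rg2.
- move=> k k' hk hk' E; apply: inj1 => //; move: E; apply: A2 => //; exact: rg1.
- move=> k k' hk hk' E; apply: inj2 => //; move: E; apply: A2 => //; exact: rg2.
- move=> c hc; have [x hx <-] := A3 hm ha hc.
  have [k hk <-] := sj1 x hx; by exists k.
- move=> k hk; have h1 := rg1 _ (ltnW hk); have h2 := rg1 _ hk.
  apply: A4 => //; rewrite -dist_rsd //; exact: d1.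
- move=> k hk; have h1 := rg2 _ (ltnW hk); have h2 := rg2 _ hk.
  apply: A4 => //; rewrite -dist_rsd //; exact: d2.
- move=> k hk; have h1 := rg1 _ hk; have h2 := rg2 _ hk.
  apply: A4 => //; rewrite -dist_rsd //; exact: dv.
- by [].
- by rewrite /rsd leqnn subnn.
- rewrite -resid_rsd //; exact: rg1.
- have h1 := rg2 _ (ltnW hj); have h2 := rg2 _ hj.
  by apply: A5 => //; rewrite -resid_rsd.
Qed.

Theorem mainTheorem17 (n : nat) (hn : 6 <= n) (hev : ~~ odd n)
  (d d' : seq int) (hnb : neighbors n d d') :
  forall j : nat, j < n.-1 ->
    ~ (nth 0%R d j = 1%R /\ nth 0%R d' j = (-1)%R) /\
    ~ (nth 0%R d j = (-1)%R /\ nth 0%R d' j = 1%R).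
Proof.
case: hnb => r [r' [[lr lr' dr dr'] [er er' lrect drect]]].
have hn2 : n = n./2 + n./2.
  by move: (odd_double_half n); rewrite (negbTE hev) add0n -addnn.
have hm : 3 <= n./2 by lia.
have d1 : forall k, k.+1 < n -> n./2.-1 <= dist n (nth 0 r k) (nth 0 r k.+1).
  move=> k hk; have hk' : k < n.-1 by lia.
  have := bigmin_le (fun i : 'I_n.-1 => dist n (nth 0 r i) (nth 0 r i.+1)) n (Ordinal hk').
  move: dr; rewrite /row_inner_dist /= => ->; lia.
have d2 : forall k, k.+1 < n -> n./2.-1 <= dist n (nth 0 r' k) (nth 0 r' k.+1).
  move=> k hk; have hk' : k < n.-1 by lia.
  have := bigmin_le (fun i : 'I_n.-1 => dist n (nth 0 r' i) (nth 0 r' i.+1)) n (Ordinal hk').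
  move: dr'; rewrite /row_inner_dist /= => ->; lia.
have dv : forall k, k < n -> n./2.-1 <= dist n (nth 0 r k) (nth 0 r' k).
  move=> k hk.
  have := bigmin_le (fun i : 'I_n => dist n (nth 0 r i) (nth 0 r' i)) n (Ordinal hk).
  move: drect; rewrite /rect2_inner_dist /= => E.
  have : n./2 - 1 <= \big[minn/n]_(j < n) dist n (nth 0 r j) (nth 0 r' j).
    by rewrite -E geq_minr.
  lia.
have dv' : forall k, k < n -> n./2.-1 <= dist n (nth 0 r' k) (nth 0 r k).
  by move=> k hk; rewrite /dist minnC; exact: dv.
move=> j hj; have hj1 : j.+1 < n by lia.
split; move=> [h1 h2].
  move: h1 h2; rewrite -er -er' !nth_ext_diff // => h1 h2.
  apply: (build hn2 hm lr lr' d1 d2 dv hj1); lia.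
move: h1 h2; rewrite -er -er' !nth_ext_diff // => h1 h2.
apply: (build hn2 hm lr' lr d2 d1 dv' hj1); lia.
Qed.
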